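(* Let $\lambda_0$ be non-recurrent. For every $q\in(0,1)$ there exist $N_1\in\mathbb{N}$, $r>0$ and $\delta>0$ such that the following holds: for every $\lambda\in D(\lambda_0,r)$ and every $n\ge N_1$, if $|\xi_{j,k}(\lambda)-\xi_{j,k}(\lambda_0)|\le\delta$ for all $0\le j\le n$ and all $0\le k\le\widetilde N$, then $$\left|\frac{\zeta_n'(\lambda)}{(f_\lambda^n)'(0)}-\frac{L_{\lambda_0}}{\lambda_0}\right|\le q\left|\frac{L_{\lambda_0}}{\lambda_0}\right|.$$ The same holds with $\zeta_n(\lambda)$ and $f_\lambda$ replaced by $\xi_n(\lambda)$ and $g_\lambda$ respectively.
   Context: For $\lambda\in\mathbb{C}\setminus\{0\}$ let $f_\lambda(z)=\lambda e^z$ with Julia set $\mathcal{J}(f_\lambda)$ and post-singular set $\mathcal{P}(f_\lambda)=\overline{\{f_\lambda^n(0): n\ge 0\}}$. A parameter $\lambda$ is non-recurrent if $0\in\mathcal{J}(f_\lambda)$ and there is $\Delta>0$ with $\mathcal{P}(f_\lambda)\cap D(0,\Delta)=\{0\}$. For non-recurrent $\lambda_0$, by a result of Benini there exist an integer $\widetilde N\ge1$ and $\tilde\gamma>1$ with $|(f_{\lambda_0}^k)'(z)|>\tilde\gamma$ for all $k\ge\widetilde N$ and all $z\in\mathcal{P}(f_{\lambda_0})$; fix such $\widetilde N$. Set $g_\lambda=f_\lambda^{\widetilde N}$, $\zeta_n(\lambda)=f^n_\lambda(0)$, $\xi_n(\lambda)=g^n_\lambda(0)$ and $\xi_{n,k}(\lambda)=f^k_\lambda(\xi_n(\lambda))$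 for $0\le k\le \widetilde N$. Here $\zeta_n'$, $\xi_n'$ are derivatives in $\lambda$, and $(f_\lambda^n)'(0)$, $(g^n_\lambda)'(0)$ are derivatives in $z$ at $0$ (with $(f^0_\lambda)'\equiv1$). For non-recurrent $\lambda_0$, the limit $L_{\lambda_0}=\lim_{n\to\infty}\sum_{j=0}^n 1/(f^j_{\lambda_0})'(0)$ exists and satisfies $L_{\lambda_0}\ne 0,\infty$ (Urbański–Zdunik). *)

(* Defs.v *)
From Stdlib Require Import Reals ClassicalEpsilon.
From Coquelicot Require Import Coquelicot.
Open Scope R_scope.

Definition Cexp (z : C) : C := (exp (Re z) * cos (Im z), exp (Re z) * sin (Im z)).

Definition Cderiv (f : C -> C) (z : C) : C :=
  epsilon (inhabits (RtoC 0)) (fun d : C => @is_derive C_AbsRing C_NormedModule f z d).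

Definition fexp (lam : C) (z : C) : C := Cmult lam (Cexp z).
Definition fiter (lam : C) (n : nat) : C -> C := Nat.iter n (fexp lam).

Definition giter (Nt : nat) (lam : C) (n : nat) : C -> C := Nat.iter n (fiter lam Nt).

Definition zeta (n : nat) (lam : C) : C := fiter lam n (RtoC 0).
Definition xi (Nt n : nat) (lam : C) : C := giter Nt lam n (RtoC 0).
Definition xik (Nt n k : nat) (lam : C) : C := fiter lam k (xi Nt n lam).

(** Normality of the iterates of F on the disk D(z0, r): every subsequence of
    (F^n) has a further subsequence converging locally uniformly on D(z0,r)
    (i.e. uniformly on every closed subdisk D̄(z0,s), s<r) either to a finite
    function or to infinity. *)
Definition strict_incr (phi : nat -> nat) : Prop := forall k, (phi k < phi (S k))%nat.

Definition loc_unif_conv (fs : nat -> C -> C) (g : C -> C) (z0 : C) (r : R) : Prop :=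
  forall s, 0 < s < r -> forall eps, 0 < eps ->
    exists N, forall n, (N <= n)%nat -> forall w, Cmod (Cminus w z0) <= s ->
      Cmod (Cminus (fs n w) (g w)) < eps.

Definition loc_unif_infty (fs : nat -> C -> C) (z0 : C) (r : R) : Prop :=
  forall s, 0 < s < r -> forall M,
    exists N, forall n, (N <= n)%nat -> forall w, Cmod (Cminus w z0) <= s ->
      M < Cmod (fs n w).

Definition normal_iterates (F : C -> C) (z0 : C) (r : R) : Prop :=
  forall phi, strict_incr phi -> exists psi, strict_incr psi /\
    ((exists g, loc_unif_conv (fun k => Nat.iter (phi (psi k)) F) g z0 r) \/
     loc_unif_infty (fun k => Nat.iter (phi (psi k)) F) z0 r).

Definition Fatou (F : C -> C) (z : C) : Prop := exists r, 0 < r /\ normal_iterates F z r.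
Definition Julia (F : C -> C) (z : C) : Prop := ~ Fatou F z.

Definition postsing (lam : C) (z : C) : Prop :=
  forall eps, 0 < eps -> exists n, Cmod (Cminus (zeta n lam) z) < eps.

Definition nonrecurrent (lam : C) : Prop :=
  lam <> RtoC 0 /\ Julia (fexp lam) (RtoC 0) /\
  exists Delta, 0 < Delta /\
    forall z, (postsing lam z /\ Cmod z < Delta) <-> z = RtoC 0.

(* Main.v *)
Require Import Defs.
From Stdlib Require Import Reals Lra Lia Psatz FunctionalExtensionality ClassicalEpsilon.
From Coquelicot Require Import Coquelicot.
Open Scope R_scope.

Lemma Rabs_le_inv a b : Rabs a <= b -> -b <= a <= b.
Proof. intros H; split_Rabs; lra. Qed.

Lemma exp_bnd u : Rabs u <= /2 -> Rabs (exp u - 1 - u) <= 2 * u^2 /\ exp u <= 2.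
Proof.
  intros Hu. apply Rabs_le_inv in Hu.
  pose proof (exp_ineq1_le u) as H1.
  pose proof (exp_ineq1_le (-u)) as H2.
  assert (He : exp u * exp (-u) = 1) by (rewrite <- exp_plus; replace (u + - u) with 0 by ring; apply exp_0).
  assert (Hp : 0 < exp u) by apply exp_pos.
  assert (Hb : exp u * (1 - u) <= 1) by nra.
  split; [| nra].
  apply Rabs_le. split; nra.
Qed.

Lemma sin_bnd v : Rabs v <= 1 -> Rabs (sin v - v) <= v^2 /\ Rabs (sin v) <= Rabs v.
Proof.
  intros Hv.
  assert (K : forall a, 0 <= a <= 1 -> a - a^2 <= sin a <= a).
  { intros a Ha. destruct (pre_sin_bound a 0 ltac:(lra) ltac:(lra)) as [A B].
    unfold sin_approx, sin_term in A, B. simpl in A, B.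
    assert (A' : a - a^3/6 <= sin a) by (eapply Rle_trans; [|exact A]; right; field).
    assert (B' : sin a <= a - a^3/6 + a^5/120) by (eapply Rle_trans; [exact B|]; right; field).
    assert (h2 : 0 <= a^2) by nra. assert (h3 : a^3 <= a^2) by nra. assert (h3' : 0 <= a^3) by nra.
    assert (h5 : a^5 <= a^3) by nra. lra. }
  destruct (Rle_dec 0 v) as [P|P].
  - specialize (K v ltac:(split; [lra| apply Rabs_le_inv in Hv; lra])).
    rewrite (Rabs_right v) by lra. assert (0 <= v^2) by nra. assert (v^2 <= v) by (apply Rabs_le_inv in Hv; nra).
    split; apply Rabs_le; lra.
  - specialize (K (-v) ltac:(split; [lra| apply Rabs_le_inv in Hv; lra])).
    rewrite sin_neg in K. rewrite (Rabs_left v) by lra. assert (0 <= v^2) by nra.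
    assert (v^2 <= -v) by (apply Rabs_le_inv in Hv; nra). replace ((-v)^2) with (v^2) in K by ring.
    split; apply Rabs_le; lra.
Qed.

Lemma cos_bnd v : Rabs v <= 1 -> Rabs (cos v - 1) <= v^2.
Proof.
  intros Hv. apply Rabs_le_inv in Hv.
  destruct (pre_cos_bound v 0 ltac:(lra) ltac:(lra)) as [A B].
  unfold cos_approx, cos_term in A, B. simpl in A, B.
  assert (A' : 1 - v^2/2 <= cos v) by (eapply Rle_trans; [|exact A]; right; field).
  assert (B' : cos v <= 1 - v^2/2 + v^4/24) by (eapply Rle_trans; [exact B|]; right; field).
  assert (h2 : 0 <= v^2) by nra. assert (h1 : v^2 <= 1) by nra. assert (h4 : v^4 <= v^2) by (replace (v^4) with (v^2*v^2) by ring; nra). apply Rabs_le. lra.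
Qed.
Lemma Cmod_le_abs (x y : R) : Cmod (x, y) <= Rabs x + Rabs y.
Proof.
  unfold Cmod; simpl.
  rewrite <- (sqrt_pow2 (Rabs x + Rabs y)) by (pose proof (Rabs_pos x); pose proof (Rabs_pos y); lra).
  apply sqrt_le_1_alt.
  rewrite <- (pow2_abs x) at 1. rewrite <- (pow2_abs y) at 1.
  pose proof (Rabs_pos x); pose proof (Rabs_pos y); nra.
Qed.

Lemma Cexp_add a b : Cexp (Cplus a b) = Cmult (Cexp a) (Cexp b).
Proof.
  destruct a as [a1 a2], b as [b1 b2]. unfold Cexp, Cplus, Cmult; simpl.
  rewrite exp_plus, cos_plus, sin_plus. f_equal; ring.
Qed.

Lemma Cmod_Cexp w : Cmod (Cexp w) = exp (Re w).
Proof.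
  unfold Cexp, Cmod, Re, Im; cbn [fst snd].
  replace ((exp (fst w) * cos (snd w)) ^ 2 + (exp (fst w) * sin (snd w)) ^ 2)
    with ((exp (fst w))^2 * ((sin (snd w))^2 + (cos (snd w))^2)) by ring.
  rewrite <- !Rsqr_pow2, sin2_cos2, Rmult_1_r. apply sqrt_Rsqr. left; apply exp_pos.
Qed.

Lemma Cexp_nz w : Cexp w <> RtoC 0.
Proof. intros H. apply Cmod_gt_0 in H; auto. rewrite Cmod_Cexp. apply exp_pos. Qed.

Lemma Cexp_quad h : Cmod h <= /2 -> Cmod (Cminus (Cminus (Cexp h) (RtoC 1)) h) <= 6 * Cmod h ^ 2.
Proof.
  intros Hh. destruct h as [u v].
  pose proof (Rmax_Cmod (u, v)) as Hm. simpl in Hm.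
  assert (Hu : Rabs u <= /2) by (pose proof (Rmax_l (Rabs u) (Rabs v)); lra).
  assert (Hv : Rabs v <= 1) by (pose proof (Rmax_r (Rabs u) (Rabs v)); lra).
  rewrite Cmod2_alt; unfold Re, Im; cbn [fst snd].
  destruct (exp_bnd u Hu) as [E1 E2]. destruct (sin_bnd v Hv) as [S1 S2]. pose proof (cos_bnd v Hv) as C1.
  unfold Cexp, Cminus, Cplus, Copp, RtoC; simpl.
  eapply Rle_trans; [apply Cmod_le_abs|].
  assert (Ep : 0 < exp u) by apply exp_pos.
  assert (A : Rabs (exp u * cos v + Ropp 1 + - u) <= 2 * u^2 + 2 * v^2).
  { replace (exp u * cos v + Ropp 1 + - u) with ((exp u - 1 - u) + exp u * (cos v - 1)) by ring.
    eapply Rle_trans; [apply Rabs_triang|]. rewrite Rabs_mult, (Rabs_right (exp u)) by lra.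
    pose proof (Rabs_pos (cos v - 1)). nra. }
  assert (B : Rabs (exp u * sin v + - 0 + - v) <= 3 * u^2 + 3 * v^2).
  { replace (exp u * sin v + - 0 + - v) with ((exp u - 1 - u) * sin v + u * sin v + (sin v - v)) by ring.
    eapply Rle_trans; [apply Rabs_triang|].
    eapply Rle_trans; [apply Rplus_le_compat_r; apply Rabs_triang|].
    rewrite !Rabs_mult.
    pose proof (Rabs_pos (exp u - 1 - u)). pose proof (Rabs_pos (sin v)). pose proof (Rabs_pos u). pose proof (Rabs_pos v).
    assert (Rabs (exp u - 1 - u) * Rabs (sin v) <= 2 * u^2) by nra.
    assert (Rabs u * Rabs (sin v) <= Rabs u * Rabs v) by nra.
    assert (Rabs u * Rabs v <= u^2 + v^2).
    { rewrite <- (pow2_abs u), <- (pow2_abs v). nra. }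
    pose proof (pow2_ge_0 u); pose proof (pow2_ge_0 v). lra. }
  pose proof (pow2_ge_0 u); pose proof (pow2_ge_0 v). lra.
Qed.

Lemma is_derive_C_intro (f : C -> C) (z l : C) :
  (forall eps, 0 < eps -> exists d, 0 < d /\ forall y, Cmod (Cminus y z) < d ->
     Cmod (Cminus (Cminus (f y) (f z)) (Cmult (Cminus y z) l)) <= eps * Cmod (Cminus y z)) ->
  @is_derive C_AbsRing C_NormedModule f z l.
Proof.
  intros H. split.
  - apply is_linear_scal_l.
  - intros x Hx. apply (@is_filter_lim_locally_unique C_AbsRing (AbsRing_NormedModule C_AbsRing)) in Hx. subst x.
    intros eps. destruct (H eps (cond_pos eps)) as [d [Hd Hy]].
    assert (Hs : sqrt 2 < 2).
    { rewrite <- (sqrt_pow2 2) at 2 by lra. apply sqrt_lt_1_alt. lra. }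
    exists (mkposreal (d/2) ltac:(lra)). intros y By.
    change (Cmod (Cminus y z) < d/2) in By.
    change (Cmod (Cminus (Cminus (f y) (f z)) (Cmult (Cminus y z) l)) <= eps * Cmod (Cminus y z)).
    apply Hy. lra.
Qed.

Lemma is_derive_Cexp z : @is_derive C_AbsRing C_NormedModule Cexp z (Cexp z).
Proof.
  apply is_derive_C_intro. intros eps Heps.
  set (M := Cmod (Cexp z)). assert (HM : 0 <= M) by apply Cmod_ge_0.
  exists (Rmin (/2) (eps / (6 * M + 1))). split.
  { apply Rmin_pos; [lra|]. apply Rdiv_lt_0_compat; lra. }
  intros y Hy. set (h := Cminus y z).
  assert (Hy' : y = Cplus z h) by (unfold h; ring).
  replace (Cminus (Cminus (Cexp y) (Cexp z)) (Cmult h (Cexp z)))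
    with (Cmult (Cexp z) (Cminus (Cminus (Cexp h) (RtoC 1)) h))
    by (rewrite Hy', Cexp_add; ring).
  rewrite Cmod_mult. fold M.
  assert (H1 : Cmod h <= /2) by (pose proof (Rmin_l (/2) (eps / (6 * M + 1))); fold h in Hy; lra).
  assert (H2 : Cmod h <= eps / (6 * M + 1)) by (pose proof (Rmin_r (/2) (eps / (6 * M + 1))); fold h in Hy; lra).
  pose proof (Cexp_quad h H1) as Q.
  pose proof (Cmod_ge_0 h) as Hh0.
  assert (H3 : (6 * M + 1) * Cmod h <= eps).
  { apply Rmult_le_compat_l with (r := 6 * M + 1) in H2; [|lra].
    replace ((6 * M + 1) * (eps / (6 * M + 1))) with eps in H2 by (field; lra). lra. }
  apply Rle_trans with (M * (6 * Cmod h ^ 2)). { apply Rmult_le_compat_l; auto. }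
  replace (M * (6 * Cmod h ^ 2)) with ((6 * M * Cmod h) * Cmod h) by ring.
  apply Rmult_le_compat_r; auto. nra.
Qed.

Lemma Cderiv_eq f z l : @is_derive C_AbsRing C_NormedModule f z l -> Cderiv f z = l.
Proof.
  intros H. unfold Cderiv.
  assert (E : exists d, @is_derive C_AbsRing C_NormedModule f z d) by (exists l; exact H).
  pose proof (epsilon_spec (inhabits (RtoC 0)) _ E) as H2.
  rewrite <- (is_C_derive_unique f z l H). symmetry. apply is_C_derive_unique. exact H2.
Qed.

Lemma norm_A (t : C) : @norm C_AbsRing (AbsRing_NormedModule C_AbsRing) t = Cmod t.
Proof. reflexivity. Qed.
Lemma norm_C (t : C) : @norm C_AbsRing C_NormedModule t = Cmod t.
Proof. reflexivity. Qed.

Lemma derive_bridge (f : C -> C) x l : @is_derive C_AbsRing (AbsRing_NormedModule C_AbsRing) f x l <-> @is_derive C_AbsRing C_NormedModule f x l.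
Proof. split; intros [_ H]; (split; [apply is_linear_scal_l|]); intros x' Hx' eps;
  specialize (H x' Hx' eps); eapply filter_imp; try exact H; intros y Hy; exact Hy.
Qed.

Lemma is_derive_val (f : C -> C) x l l' : @is_derive C_AbsRing (AbsRing_NormedModule C_AbsRing) f x l -> l = l' ->
  @is_derive C_AbsRing C_NormedModule f x l'.
Proof. intros H ->. apply derive_bridge, H. Qed.

Lemma is_derive_fexp lam w : @is_derive C_AbsRing C_NormedModule (fexp lam) w (fexp lam w).
Proof.
  eapply is_derive_val.
  - apply (@is_derive_mult C_AbsRing (fun _ => lam) Cexp w zero (Cexp w)).
    + apply derive_bridge, (@is_derive_const C_AbsRing _ lam w).
    + apply derive_bridge, is_derive_Cexp.
    + exact Cmult_comm.
  - change (Cplus (Cmult (RtoC 0) (Cexp w)) (Cmult lam (Cexp w)) = fexp lam w).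
    unfold fexp. ring.
Qed.

Fixpoint Dz (lam : C) (n : nat) (z : C) : C :=
  match n with O => RtoC 1 | S n => Cmult (fiter lam (S n) z) (Dz lam n z) end.

Lemma is_derive_fiter lam n z : @is_derive C_AbsRing C_NormedModule (fiter lam n) z (Dz lam n z).
Proof.
  induction n as [|n IH].
  - eapply is_derive_val. apply (@is_derive_id C_AbsRing z). reflexivity.
  - change (fiter lam (S n)) with (fun x => fexp lam (fiter lam n x)).
    eapply is_derive_val.
    + apply (@is_derive_comp C_AbsRing (AbsRing_NormedModule C_AbsRing) (fexp lam) (fiter lam n) z).
      * apply derive_bridge, is_derive_fexp.
      * apply derive_bridge, IH.
    + change (Cmult (Dz lam n z) (fexp lam (fiter lam n z)) = Cmult (fexp lam (fiter lam n z)) (Dz lam n z)).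
      apply Cmult_comm.
Qed.

Lemma Cderiv_fiter lam n z : Cderiv (fiter lam n) z = Dz lam n z.
Proof. apply Cderiv_eq, is_derive_fiter. Qed.

Fixpoint Ez (n : nat) (lam : C) : C :=
  match n with O => RtoC 0 | S n => Cplus (Cexp (zeta n lam)) (Cmult lam (Cmult (Ez n lam) (Cexp (zeta n lam)))) end.

Lemma zeta_S n lam : zeta (S n) lam = Cmult lam (Cexp (zeta n lam)).
Proof. reflexivity. Qed.

Lemma is_derive_zeta n lam : @is_derive C_AbsRing C_NormedModule (zeta n) lam (Ez n lam).
Proof.
  induction n as [|n IH].
  - change (zeta 0) with (fun _ : C => RtoC 0).
    eapply is_derive_val. apply (@is_derive_const C_AbsRing (AbsRing_NormedModule C_AbsRing) (RtoC 0) lam). reflexivity.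
  - change (zeta (S n)) with (fun l => Cmult l (Cexp (zeta n l))).
    eapply is_derive_val.
    + apply (@is_derive_mult C_AbsRing (fun l => l) (fun l => Cexp (zeta n l)) lam one).
      * apply (@is_derive_id C_AbsRing lam).
      * apply (@is_derive_comp C_AbsRing (AbsRing_NormedModule C_AbsRing) Cexp (zeta n) lam).
        -- apply derive_bridge, is_derive_Cexp.
        -- apply derive_bridge, IH.
      * exact Cmult_comm.
    + change (Cplus (Cmult (RtoC 1) (Cexp (zeta n lam))) (Cmult lam (Cmult (Ez n lam) (Cexp (zeta n lam)))) = Ez (S n) lam).
      simpl. ring.
Qed.

Lemma Cderiv_zeta n lam : Cderiv (zeta n) lam = Ez n lam.
Proof. apply Cderiv_eq, is_derive_zeta. Qed.

Fixpoint Pw (w : nat -> C) (s k : nat) : C :=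
  match k with O => RtoC 1 | S k => Cmult (Pw w s k) (w (s + S k)%nat) end.

Definition zs (lam : C) : nat -> C := fun i => zeta i lam.

Fixpoint Ssum (f : nat -> C) (n : nat) : C :=
  match n with O => RtoC 0 | S n => Cplus (Ssum f n) (f n) end.

Lemma fiter_add lam i j z : fiter lam i (fiter lam j z) = fiter lam (i + j) z.
Proof. induction i as [|i IH]; simpl; [reflexivity|]. unfold fiter in *; simpl. rewrite IH. reflexivity. Qed.

Lemma fiter_zeta lam i m : fiter lam i (zeta m lam) = zeta (i + m) lam.
Proof. unfold zeta. apply fiter_add. Qed.

Lemma Dz_Pw lam k s : Dz lam k (zeta s lam) = Pw (zs lam) s k.
Proof.
  induction k as [|k IH]; simpl; [reflexivity|].
  rewrite IH. change (fiter lam (S k) (zeta s lam)) with (fiter lam (S k) (zeta s lam)).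
  rewrite fiter_zeta. unfold zs. change (fexp lam (zeta (k+s) lam)) with (zeta (S (k+s)) lam). replace (S (k+s)) with (s + S k)%nat by lia. apply Cmult_comm.
Qed.

Lemma giter_fiter Nt lam n z : giter Nt lam n z = fiter lam (n * Nt) z.
Proof.
  induction n as [|n IH]; [reflexivity|].
  change (giter Nt lam (S n) z) with (fiter lam Nt (giter Nt lam n z)).
  rewrite IH, fiter_add. reflexivity.
Qed.

Lemma xi_zeta Nt n lam : xi Nt n lam = zeta (n * Nt) lam.
Proof. unfold xi, zeta. apply giter_fiter. Qed.

Lemma xik_zeta Nt j k lam : xik Nt j k lam = zeta (k + j * Nt) lam.
Proof. unfold xik. rewrite xi_zeta. apply fiter_zeta. Qed.

Lemma Pw_split w s a b : Pw w s (a + b) = Cmult (Pw w s a) (Pw w (s + a) b).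
Proof.
  induction b as [|b IH].
  - rewrite Nat.add_0_r. simpl. ring.
  - rewrite <- plus_n_Sm. simpl. rewrite IH.
    replace (s + S (a + b))%nat with (s + a + S b)%nat by lia. ring.
Qed.

Lemma zeta_nz lam i : lam <> RtoC 0 -> (1 <= i)%nat -> zeta i lam <> RtoC 0.
Proof.
  intros Hl Hi. destruct i as [|i]; [lia|]. rewrite zeta_S.
  intros H. apply Cmult_neq_0 in H; auto. apply Cexp_nz.
Qed.

Lemma Pw_nz lam s k : lam <> RtoC 0 -> Pw (zs lam) s k <> RtoC 0.
Proof.
  intros Hl. induction k as [|k IH]; simpl.
  - apply C1_nz.
  - intros H. apply Cmult_neq_0 in H; auto. unfold zs. apply zeta_nz; auto; lia.
Qed.

Lemma Ez_identity lam n : lam <> RtoC 0 ->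
  Cmult lam (Ez n lam) = Cmult (Ssum (fun j => Cinv (Pw (zs lam) 0 j)) n) (Pw (zs lam) 0 n).
Proof.
  intros Hl. induction n as [|n IH].
  - simpl. ring.
  - simpl Ez. simpl Ssum. change (Pw (zs lam) 0 (S n)) with (Cmult (Pw (zs lam) 0 n) (zeta (S n) lam)).
    rewrite zeta_S.
    assert (Hp := Pw_nz lam 0 n Hl).
    transitivity (Cmult (Cmult lam (Cexp (zeta n lam))) (Cplus (RtoC 1) (Cmult lam (Ez n lam)))).
    + ring.
    + rewrite IH. field. exact Hp.
Qed.

Lemma ratio_identity lam n : lam <> RtoC 0 ->
  Cdiv (Cderiv (zeta n) lam) (Cderiv (fiter lam n) (RtoC 0)) =
  Cdiv (Ssum (fun j => Cinv (Pw (zs lam) 0 j)) n) lam.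
Proof.
  intros Hl. rewrite Cderiv_zeta, Cderiv_fiter.
  change (Dz lam n (RtoC 0)) with (Dz lam n (zeta 0 lam)). rewrite Dz_Pw.
  assert (Hp := Pw_nz lam 0 n Hl).
  assert (E := Ez_identity lam n Hl).
  replace (Ez n lam) with (Cdiv (Cmult (Ssum (fun j => Cinv (Pw (zs lam) 0 j)) n) (Pw (zs lam) 0 n)) lam)
    by (rewrite <- E; field; exact Hl).
  field. split; assumption.
Qed.

Lemma sum_n_Ssum (f : nat -> C) n : sum_n f n = Ssum f (S n).
Proof.
  induction n as [|n IH].
  - rewrite sum_O. simpl. change (f 0%nat = Cplus (RtoC 0) (f 0%nat)). ring.
  - rewrite sum_Sn, IH. reflexivity.
Qed.

Lemma Cmod_rev a b : Cmod a - Cmod b <= Cmod (Cminus a b).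
Proof.
  pose proof (Cmod_triangle b (Cminus a b)) as H.
  replace (Cplus b (Cminus a b)) with a in H by ring. lra.
Qed.

Lemma bern_low x n : 0 <= x <= 1 -> 1 - INR n * x <= (1 - x)^n.
Proof.
  intros Hx. induction n as [|n IH]; [simpl; lra|].
  rewrite S_INR. change ((1 - x)^(S n)) with ((1-x) * (1-x)^n). pose proof (pow_le (1 - x) n ltac:(lra)) as P.
  destruct (Rle_dec 0 (1 - INR n * x)).
  - assert (0 <= INR n) by apply pos_INR. nra.
  - nra.
Qed.

Lemma pow_up x n : 0 <= x <= 1 -> (1 + x)^n <= 1 + 3^n * x.
Proof.
  intros Hx. induction n as [|n IH]; simpl; [lra|].
  assert (1 <= 3^n) by (apply pow_R1_Rle; lra).
  assert (S1 : (1 + x) * (1 + x)^n <= (1 + x) * (1 + 3^n * x)) by (apply Rmult_le_compat_l; lra).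
  assert (x * x <= x) by nra. assert (3^n * (x*x) <= 3^n * x) by (apply Rmult_le_compat_l; lra). nra.
Qed.

Lemma pow_le1 x n : 0 <= x <= 1 -> x ^ n <= 1.
Proof. intros H. induction n; simpl; [lra|]. pose proof (pow_le x n ltac:(lra)). nra. Qed.

Lemma geo (w : nat -> C) Nt m mu rho : (1 <= Nt)%nat -> 0 < mu -> 1 <= rho ->
  (forall i, (1 <= i <= m)%nat -> mu <= Cmod (w i)) ->
  (forall s, (s + Nt <= m)%nat -> rho ^ Nt <= Cmod (Pw w s Nt)) ->
  forall j, (j <= m)%nat -> (Rmin mu 1 / rho)^Nt * rho^j <= Cmod (Pw w 0 j).
Proof.
  intros HNt Hmu Hrho Hw Hb.
  set (mu' := Rmin mu 1).
  assert (Hmu' : 0 < mu' <= 1) by (unfold mu'; split; [apply Rmin_pos; lra | apply Rmin_r]).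
  assert (Hmu2 : mu' <= mu) by apply Rmin_l.
  assert (L1 : forall j, (j <= m)%nat -> mu'^j <= Cmod (Pw w 0 j)).
  { induction j as [|j IH]; intros Hj; simpl.
    - rewrite Cmod_1. lra.
    - rewrite Cmod_mult. specialize (IH ltac:(lia)). specialize (Hw (S j) ltac:(lia)).
      pose proof (pow_le mu' j ltac:(lra)). pose proof (Cmod_ge_0 (Pw w 0 j)). nra. }
  assert (Hq : 0 < mu' / rho <= 1).
  { split. apply Rdiv_lt_0_compat; lra. apply (Rmult_le_reg_r rho); [lra|]. unfold Rdiv. rewrite Rmult_assoc, Rinv_l, Rmult_1_r by lra. lra. }
  intros j. induction j as [j IH] using (well_founded_induction Wf_nat.lt_wf). intros Hj.
  destruct (Nat.lt_ge_cases j Nt) as [Hlt|Hge].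
  - eapply Rle_trans; [|apply L1; exact Hj].
    replace Nt with (j + (Nt - j))%nat by lia. rewrite pow_add.
    assert (((mu' / rho) ^ (Nt - j)) <= 1) by (apply pow_le1; lra).
    assert (0 <= (mu'/rho)^j) by (apply pow_le; lra).
    assert (0 < rho ^ j) by (apply pow_lt; lra).
    assert (E : (mu'/rho)^j * rho^j = mu'^j) by (rewrite <- Rpow_mult_distr; f_equal; field; lra).
    pose proof (pow_le mu' j ltac:(lra)).
    assert (0 <= (mu'/rho)^(Nt-j)) by (apply pow_le; lra).
    replace ((mu' / rho) ^ j * (mu' / rho) ^ (Nt - j) * rho ^ j) with (mu'^j * (mu' / rho) ^ (Nt - j)) by (rewrite <- E; ring).
    nra.
  - replace j with ((j - Nt) + Nt)%nat by lia. rewrite Pw_split, Cmod_mult, pow_add.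
    simpl (0 + (j - Nt))%nat.
    specialize (IH (j - Nt)%nat ltac:(lia) ltac:(lia)).
    specialize (Hb (j - Nt)%nat ltac:(lia)).
    assert (0 <= (mu'/rho)^Nt * rho^(j - Nt)).
    { apply Rmult_le_pos; apply pow_le; lra. }
    assert (0 <= rho^Nt) by (apply pow_le; lra).
    rewrite <- Rmult_assoc. apply Rmult_le_compat; auto.
Qed.

Fixpoint Rsum (u : nat -> R) (n : nat) : R :=
  match n with O => 0 | S n => Rsum u n + u n end.

Lemma Cmod_Ssum f n : Cmod (Ssum f n) <= Rsum (fun j => Cmod (f j)) n.
Proof.
  induction n as [|n IH]; simpl.
  - rewrite Cmod_0. lra.
  - eapply Rle_trans; [apply Cmod_triangle|]. lra.
Qed.

Lemma Ssum_minus f g n : Cminus (Ssum f n) (Ssum g n) = Ssum (fun j => Cminus (f j) (g j)) n.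
Proof. induction n as [|n IH]; simpl; [ring|]. rewrite <- IH. ring. Qed.

Lemma sum_bound (u : nat -> R) J h K sg m : 0 <= h -> 0 <= K -> 0 <= sg < 1 ->
  (forall j, (j < m)%nat -> (j < J)%nat -> u j <= h) ->
  (forall j, (j < m)%nat -> (J <= j)%nat -> u j <= K * sg ^ j) ->
  Rsum u m <= INR J * h + K * sg ^ J / (1 - sg).
Proof.
  intros Hh HK Hs H1 H2.
  assert (Main : Rsum u m <= INR (Nat.min m J) * h + K * (sg ^ J - sg ^ (Nat.max m J)) / (1 - sg)).
  { induction m as [|m IH].
    - simpl. replace (sg^J - sg^J) with 0 by ring. unfold Rdiv. lra.
    - simpl Rsum.
      assert (IH' := IH (fun j a b => H1 j ltac:(lia) b) (fun j a b => H2 j ltac:(lia) b)).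
      destruct (Nat.lt_ge_cases m J) as [Hl|Hg].
      + rewrite Nat.min_l in IH' by lia. rewrite Nat.max_r in IH' by lia.
        rewrite Nat.min_l by lia. rewrite Nat.max_r by lia. rewrite S_INR.
        specialize (H1 m ltac:(lia) Hl). lra.
      + rewrite Nat.min_r in IH' by lia. rewrite Nat.max_l in IH' by lia.
        rewrite Nat.min_r by lia. rewrite Nat.max_l by lia.
        specialize (H2 m ltac:(lia) Hg).
        assert (E : K * (sg ^ J - sg ^ S m) / (1 - sg) = K * (sg ^ J - sg ^ m) / (1 - sg) + K * sg ^ m)
          by (simpl; field; lra).
        lra. }
  eapply Rle_trans; [exact Main|].
  assert (INR (Nat.min m J) <= INR J) by (apply le_INR; lia).
  assert (0 <= sg ^ (Nat.max m J)) by (apply pow_le; lra).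
  assert (0 < 1 - sg) by lra.
  assert (K * (sg ^ J - sg ^ Nat.max m J) / (1 - sg) <= K * sg ^ J / (1 - sg)).
  { unfold Rdiv. apply Rmult_le_compat_r; [left; apply Rinv_0_lt_compat; lra|]. nra. }
  nra.
Qed.

Lemma ratio_close (a b : nat -> C) m x : 0 <= x ->
  (forall i, (1 <= i <= m)%nat -> b i <> RtoC 0) ->
  (forall i, (1 <= i <= m)%nat -> Cmod (Cminus (Cdiv (a i) (b i)) (RtoC 1)) <= x) ->
  forall j, (j <= m)%nat -> Cmod (Cminus (Cdiv (Pw a 0 j) (Pw b 0 j)) (RtoC 1)) <= (1 + x)^j - 1.
Proof.
  intros Hx Hb Hr. induction j as [|j IH]; intros Hj.
  - simpl. replace (Cminus (Cdiv (RtoC 1) (RtoC 1)) (RtoC 1)) with (RtoC 0) by (field; apply C1_nz).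
    rewrite Cmod_0. lra.
  - assert (Hpb : Pw b 0 j <> RtoC 0).
    { clear IH. induction j as [|j IHj]; simpl. apply C1_nz.
      intros H. apply Cmult_neq_0 in H; auto. apply IHj; lia. apply Hb; lia. }
    specialize (IH ltac:(lia)). specialize (Hr (S j) ltac:(lia)). specialize (Hb (S j) ltac:(lia)).
    simpl Pw. simpl (0 + S j)%nat.
    set (A := Cminus (Cdiv (Pw a 0 j) (Pw b 0 j)) (RtoC 1)) in *.
    set (B := Cminus (Cdiv (a (S j)) (b (S j))) (RtoC 1)) in *.
    replace (Cminus (Cdiv (Cmult (Pw a 0 j) (a (S j))) (Cmult (Pw b 0 j) (b (S j)))) (RtoC 1))
      with (Cplus (Cplus (Cmult A B) A) B) by (unfold A, B; field; split; assumption).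
    eapply Rle_trans; [apply Cmod_triangle|].
    eapply Rle_trans; [apply Rplus_le_compat_r; apply Cmod_triangle|].
    rewrite Cmod_mult.
    pose proof (Cmod_ge_0 A). pose proof (Cmod_ge_0 B).
    change ((1 + x)^(S j)) with ((1+x) * (1+x)^j).
    assert (1 <= (1 + x)^j) by (apply pow_R1_Rle; lra).
    assert (Cmod A * Cmod B <= ((1+x)^j - 1) * x) by (apply Rmult_le_compat; auto).
    nra.
Qed.

Lemma Pw_lower_ratio lam lam0 m Delta th : 0 <= th <= 1 ->
  (forall i, (1 <= i)%nat -> Delta <= Cmod (zeta i lam0)) ->
  (forall i, (i <= m)%nat -> Cmod (Cminus (zeta i lam) (zeta i lam0)) <= th * Delta) ->
  forall s k, (s + k <= m)%nat -> Cmod (Pw (zs lam0) s k) * (1 - th)^k <= Cmod (Pw (zs lam) s k).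
Proof.
  intros Hth HD Hc s k. induction k as [|k IH]; intros Hk.
  - simpl. lra.
  - simpl Pw. rewrite !Cmod_mult. specialize (IH ltac:(lia)).
    change ((1 - th)^(S k)) with ((1 - th) * (1 - th)^k).
    unfold zs at 2 4.
    assert (Hz : Cmod (zeta (s + S k) lam0) * (1 - th) <= Cmod (zeta (s + S k) lam)).
    { specialize (HD (s + S k)%nat ltac:(lia)). specialize (Hc (s + S k)%nat ltac:(lia)).
      pose proof (Cmod_rev (zeta (s + S k) lam0) (zeta (s + S k) lam)) as R.
      rewrite <- Cmod_opp in Hc.
      replace (Copp (Cminus (zeta (s + S k) lam) (zeta (s + S k) lam0))) with
        (Cminus (zeta (s + S k) lam0) (zeta (s + S k) lam)) in Hc by ring.
      nra. }
    pose proof (Cmod_ge_0 (Pw (zs lam0) s k)). pose proof (Cmod_ge_0 (zeta (s + S k) lam0)).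
    pose proof (pow_le (1 - th) k ltac:(lra)).
    assert (0 <= Cmod (Pw (zs lam0) s k) * (1 - th) ^ k) by nra.
    assert (0 <= Cmod (zeta (s + S k) lam0) * (1 - th)) by nra.
    replace (Cmod (Pw (zs lam0) s k) * Cmod (zeta (s + S k) lam0) * ((1 - th) * (1 - th) ^ k))
      with ((Cmod (Pw (zs lam0) s k) * (1 - th) ^ k) * (Cmod (zeta (s + S k) lam0) * (1 - th))) by ring.
    apply Rmult_le_compat; auto.
Qed.

Lemma final_step S L lam lam0 E r : lam0 <> RtoC 0 -> 0 < E ->
  Cmod (Cminus S L) <= E * Cmod lam0 / 4 -> Cmod (Cminus lam lam0) < r ->
  r <= Cmod lam0 / 2 -> r <= E * Cmod lam0 ^ 2 / (4 * Cmod L + 1) ->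
  Cmod (Cminus (Cdiv S lam) (Cdiv L lam0)) <= E.
Proof.
  intros H0 HE H1 H2 H3 H4.
  set (a := Cmod lam0). assert (Ha : 0 < a) by (apply Cmod_gt_0; exact H0).
  pose proof (Cmod_rev lam0 lam) as R1. rewrite <- Cmod_opp in H2.
  replace (Copp (Cminus lam lam0)) with (Cminus lam0 lam) in H2 by ring.
  set (D := Cmod (Cminus lam0 lam)) in *.
  assert (Hb : a / 2 <= Cmod lam) by (unfold a in *; lra).
  set (b := Cmod lam) in *.
  assert (Hl : lam <> RtoC 0) by (apply Cmod_gt_0; unfold b in Hb; lra).
  replace (Cminus (Cdiv S lam) (Cdiv L lam0)) with
    (Cplus (Cdiv (Cminus S L) lam) (Cdiv (Cmult L (Cminus lam0 lam)) (Cmult lam lam0)))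
    by (field; split; assumption).
  eapply Rle_trans; [apply Cmod_triangle|].
  rewrite !Cmod_div by (try apply Cmult_neq_0; assumption).
  rewrite !Cmod_mult. fold a b D.
  set (X := Cmod (Cminus S L)) in *. set (CL := Cmod L).
  assert (HCL : 0 <= CL) by apply Cmod_ge_0.
  assert (HD : 0 <= D) by apply Cmod_ge_0.
  assert (T1 : X / b <= E / 2).
  { apply (Rmult_le_reg_r b); [lra|]. unfold Rdiv. rewrite Rmult_assoc, Rinv_l, Rmult_1_r by lra. nra. }
  assert (T2 : CL * D / (b * a) <= E / 2).
  { apply (Rmult_le_reg_r (b * a)); [nra|]. unfold Rdiv. rewrite Rmult_assoc, Rinv_l, Rmult_1_r by nra.
    assert (R4 : r * (4 * CL + 1) <= E * a ^ 2).
    { apply (Rmult_le_compat_r (4 * CL + 1)) in H4; [|lra].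
      unfold Rdiv in H4. rewrite Rmult_assoc, Rinv_l, Rmult_1_r in H4 by lra. exact H4. }
    assert (CL * D <= CL * r) by (apply Rmult_le_compat_l; lra).
    assert (CL * r * 4 <= E * a^2) by nra.
    assert (E * a * a / 4 <= E / 2 * (b * a)).
    { assert (0 <= E * a) by nra. assert (0 <= E * a * (b - a/2)) by (apply Rmult_le_pos; lra). lra. }
    simpl in *. nra. }
  lra.
Qed.

Lemma inv_diff_bound (P P0 : C) c y : 0 < c -> c <= Cmod P0 -> P <> RtoC 0 ->
  Cmod (Cminus (Cdiv P0 P) (RtoC 1)) <= y ->
  Cmod (Cminus (Cinv P) (Cinv P0)) <= y / c.
Proof.
  intros Hc HP0 HP Hy.
  assert (HP0' : P0 <> RtoC 0) by (apply Cmod_gt_0; lra).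
  replace (Cminus (Cinv P) (Cinv P0)) with (Cmult (Cinv P0) (Cminus (Cdiv P0 P) (RtoC 1))) by (field; split; assumption).
  rewrite Cmod_mult, Cmod_inv by assumption.
  pose proof (Cmod_ge_0 (Cminus (Cdiv P0 P) (RtoC 1))).
  assert (/ Cmod P0 <= / c) by (apply Rinv_le_contravar; lra).
  assert (0 <= / Cmod P0) by (left; apply Rinv_0_lt_compat; lra).
  unfold Rdiv. rewrite Rmult_comm. apply Rmult_le_compat; try lra.
Qed.

Lemma inv_sum_bound (P P0 : C) B : 0 < B -> B <= Cmod P -> B <= Cmod P0 ->
  Cmod (Cminus (Cinv P) (Cinv P0)) <= 2 / B.
Proof.
  intros HB H1 H2.
  assert (HP : P <> RtoC 0) by (apply Cmod_gt_0; lra).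
  assert (HP0 : P0 <> RtoC 0) by (apply Cmod_gt_0; lra).
  unfold Cminus. eapply Rle_trans; [apply Cmod_triangle|]. rewrite Cmod_opp, !Cmod_inv by assumption.
  assert (/ Cmod P <= / B) by (apply Rinv_le_contravar; lra).
  assert (/ Cmod P0 <= / B) by (apply Rinv_le_contravar; lra).
  unfold Rdiv. lra.
Qed.

Lemma core lam0 Nt gam L Delta E :
  lam0 <> RtoC 0 -> (1 <= Nt)%nat -> 1 < gam -> 0 < Delta -> 0 < E ->
  (forall i, (1 <= i)%nat -> Delta <= Cmod (zeta i lam0)) ->
  (forall s, gam < Cmod (Pw (zs lam0) s Nt)) ->
  (forall eps, 0 < eps -> exists M, forall n, (M <= n)%nat ->
      Cmod (Cminus (Ssum (fun j => Cinv (Pw (zs lam0) 0 j)) n) L) < eps) ->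
  exists N1 r delta, 0 < r /\ 0 < delta /\ forall lam, Cmod (Cminus lam lam0) < r -> forall m, (N1 <= m)%nat ->
    (forall i, (i <= m)%nat -> Cmod (Cminus (zeta i lam) (zeta i lam0)) <= delta) ->
    Cmod (Cminus (Cdiv (Ssum (fun j => Cinv (Pw (zs lam) 0 j)) m) lam) (Cdiv L lam0)) <= E.
Proof.
  intros H0 HNt Hgam HDelta HE HD HB HL.
  assert (HNtR : 1 <= INR Nt) by (apply (le_INR 1); lia).
  set (th0 := Rmin (/2) ((gam - 1) / (2 * gam * INR Nt))).
  assert (Hth0 : 0 < th0 <= /2).
  { split; [apply Rmin_pos; [lra|] | apply Rmin_l].
    apply Rdiv_lt_0_compat; [lra|]. apply Rmult_lt_0_compat; lra. }
  assert (HB1 : (gam + 1) / 2 <= gam * (1 - th0)^Nt).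
  { pose proof (bern_low th0 Nt ltac:(lra)) as Bn.
    assert (INR Nt * th0 <= (gam - 1) / (2 * gam)).
    { apply Rle_trans with (INR Nt * ((gam - 1) / (2 * gam * INR Nt))).
      - apply Rmult_le_compat_l; [lra| apply Rmin_r].
      - right. field. split; lra. }
    assert (gam * (INR Nt * th0) <= (gam - 1) / 2).
    { apply Rle_trans with (gam * ((gam - 1) / (2 * gam))). apply Rmult_le_compat_l; lra.
      right. field. lra. }
    nra. }
  set (eta := Rmin 1 ((gam - 1) / (2 * 3^Nt))).
  assert (H3 : 0 < 3^Nt) by (apply pow_lt; lra).
  assert (Heta : 0 < eta <= 1).
  { split; [apply Rmin_pos; [lra|] | apply Rmin_l]. apply Rdiv_lt_0_compat; lra. }
  set (rho := 1 + eta).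
  assert (HB2 : rho ^ Nt <= (gam + 1) / 2).
  { unfold rho. eapply Rle_trans; [apply pow_up; lra|].
    assert (eta <= (gam - 1) / (2 * 3^Nt)) by apply Rmin_r.
    assert (3^Nt * eta <= (gam - 1) / 2).
    { apply Rle_trans with (3^Nt * ((gam - 1) / (2 * 3^Nt))). apply Rmult_le_compat_l; lra.
      right. field. lra. }
    lra. }
  set (mu := Delta * (1 - th0)).
  assert (Hmu : Delta / 2 <= mu) by (unfold mu; nra).
  assert (Hmu0 : 0 < mu) by lra.
  set (c := (Rmin mu 1 / rho)^Nt).
  assert (Hc : 0 < c).
  { apply pow_lt. apply Rdiv_lt_0_compat; [apply Rmin_pos|unfold rho]; lra. }
  assert (Hrho : 1 < rho) by (unfold rho; lra).
  assert (G0 : forall j, c * rho ^ j <= Cmod (Pw (zs lam0) 0 j)).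
  { intros j. apply (geo (zs lam0) Nt j mu rho); try lra; auto.
    - intros i Hi. unfold zs. specialize (HD i ltac:(lia)). unfold mu. nra.
    - intros s _. specialize (HB s). lra. }
  set (sg := / rho).
  assert (Hsg : 0 < sg < 1).
  { unfold sg. split. apply Rinv_0_lt_compat; lra. rewrite <- Rinv_1. apply Rinv_lt_contravar; lra. }
  set (K := 2 / c). assert (HK : 0 < K) by (unfold K; apply Rdiv_lt_0_compat; lra).
  assert (HL0 : 0 < Cmod lam0) by (apply Cmod_gt_0; exact H0).
  set (e1 := E * Cmod lam0 / 4). assert (He1 : 0 < e1) by (unfold e1; nra).
  destruct (pow_lt_1_zero sg ltac:(rewrite Rabs_right; lra) (e1 * (1 - sg) / (4 * K + 1)))
    as [J HJ].
  { apply Rdiv_lt_0_compat; [nra|lra]. }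
  specialize (HJ J (Nat.le_refl J)). rewrite Rabs_right in HJ by (left; apply pow_lt; lra).
  assert (HJ' : K * sg ^ J / (1 - sg) <= e1 / 4).
  { apply (Rmult_le_reg_r (1 - sg)); [lra|]. unfold Rdiv. rewrite Rmult_assoc, Rinv_l, Rmult_1_r by lra.
    assert (K * sg^J <= K * (e1 * (1 - sg) / (4 * K + 1))) by (apply Rmult_le_compat_l; lra).
    assert (K * (e1 * (1 - sg) / (4 * K + 1)) <= e1 * /4 * (1 - sg)).
    { unfold Rdiv. apply (Rmult_le_reg_r (4 * K + 1)); [lra|].
      rewrite !Rmult_assoc, Rinv_l by lra. rewrite Rmult_1_r.
      assert (0 <= e1 * (1 - sg)) by nra. nra. }
    lra. }
  set (A3 := INR J * 3^J + 1).
  assert (HA3 : 1 <= A3) by (unfold A3; pose proof (pos_INR J); pose proof (pow_lt 3 J ltac:(lra)); nra).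
  set (delta := Rmin (th0 * Delta) (mu * e1 * c / (4 * A3))).
  assert (Hdelta : 0 < delta).
  { apply Rmin_pos; [nra|]. apply Rdiv_lt_0_compat; [|lra]. apply Rmult_lt_0_compat; [nra|lra]. }
  assert (Hd1 : delta <= th0 * Delta) by apply Rmin_l.
  assert (Hd2 : delta <= mu * e1 * c / (4 * A3)) by apply Rmin_r.
  destruct (HL (e1 / 2) ltac:(lra)) as [M HM].
  exists M, (Rmin (Cmod lam0 / 2) (E * Cmod lam0 ^ 2 / (4 * Cmod L + 1))), delta.
  split.
  { apply Rmin_pos; [lra|]. apply Rdiv_lt_0_compat. apply Rmult_lt_0_compat; [lra| apply pow_lt; lra].
    pose proof (Cmod_ge_0 L); lra. }
  split; [exact Hdelta|].
  intros lam Hlam m Hm Hcl.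
  apply final_step with (r := Rmin (Cmod lam0 / 2) (E * Cmod lam0 ^ 2 / (4 * Cmod L + 1)));
    try assumption; [| apply Rmin_l | apply Rmin_r].
  assert (Hlam0 : lam <> RtoC 0).
  { pose proof (Rmin_l (Cmod lam0 / 2) (E * Cmod lam0 ^ 2 / (4 * Cmod L + 1))).
    pose proof (Cmod_rev lam0 lam) as R1. rewrite <- Cmod_opp in Hlam.
    replace (Copp (Cminus lam lam0)) with (Cminus lam0 lam) in Hlam by ring.
    apply Cmod_gt_0. lra. }
  assert (Hcl' : forall i, (i <= m)%nat -> Cmod (Cminus (zeta i lam) (zeta i lam0)) <= th0 * Delta).
  { intros i Hi. specialize (Hcl i Hi). lra. }
  assert (Hmul : forall i, (1 <= i <= m)%nat -> mu <= Cmod (zeta i lam) /\ zeta i lam <> RtoC 0).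
  { intros i Hi. specialize (Hcl i ltac:(lia)). specialize (HD i ltac:(lia)).
    pose proof (Cmod_rev (zeta i lam0) (zeta i lam)) as R.
    rewrite <- Cmod_opp in Hcl.
    replace (Copp (Cminus (zeta i lam) (zeta i lam0))) with (Cminus (zeta i lam0) (zeta i lam)) in Hcl by ring.
    assert (mu <= Cmod (zeta i lam)) by (unfold mu; nra).
    split; [lra|]. apply Cmod_gt_0. lra. }
  assert (Hblk : forall s, (s + Nt <= m)%nat -> rho ^ Nt <= Cmod (Pw (zs lam) s Nt)).
  { intros s Hs. pose proof (Pw_lower_ratio lam lam0 m Delta th0 ltac:(lra) HD Hcl' s Nt Hs) as P.
    specialize (HB s). pose proof (pow_le (1 - th0) Nt ltac:(lra)).
    assert (gam * (1 - th0)^Nt <= Cmod (Pw (zs lam0) s Nt) * (1 - th0)^Nt) by (apply Rmult_le_compat_r; lra).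
    lra. }
  assert (G : forall j, (j <= m)%nat -> c * rho ^ j <= Cmod (Pw (zs lam) 0 j)).
  { apply (geo (zs lam) Nt m mu rho); try lra; auto.
    intros i Hi. apply Hmul; auto. }
  set (x := delta / mu).
  assert (Hx : 0 <= x <= 1).
  { unfold x. split. left; apply Rdiv_lt_0_compat; lra.
    apply (Rmult_le_reg_r mu); [lra|]. unfold Rdiv. rewrite Rmult_assoc, Rinv_l by lra. nra. }
  assert (RC : forall j, (j <= m)%nat ->
     Cmod (Cminus (Cdiv (Pw (zs lam0) 0 j) (Pw (zs lam) 0 j)) (RtoC 1)) <= (1 + x)^j - 1).
  { apply ratio_close; [lra| |].
    - intros i Hi. apply Hmul; auto.
    - intros i Hi. destruct (Hmul i Hi) as [Hm1 Hm2]. unfold zs.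
      replace (Cminus (Cdiv (zeta i lam0) (zeta i lam)) (RtoC 1)) with
        (Cdiv (Cminus (zeta i lam0) (zeta i lam)) (zeta i lam)) by (field; exact Hm2).
      rewrite Cmod_div by exact Hm2.
      specialize (Hcl i ltac:(lia)). rewrite <- Cmod_opp in Hcl.
      replace (Copp (Cminus (zeta i lam) (zeta i lam0))) with (Cminus (zeta i lam0) (zeta i lam)) in Hcl by ring.
      unfold x, Rdiv. pose proof (Cmod_ge_0 (Cminus (zeta i lam0) (zeta i lam))).
      apply Rmult_le_compat; try lra.
      left; apply Rinv_0_lt_compat; lra. apply Rinv_le_contravar; lra. }
  set (h := 3^J * x / c).
  assert (Hh : 0 <= h) by (unfold h; apply Rdiv_le_0_compat; [apply Rmult_le_pos; [left; apply pow_lt; lra|lra]|lra]).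
  assert (Hsum : Rsum (fun j => Cmod (Cminus (Cinv (Pw (zs lam) 0 j)) (Cinv (Pw (zs lam0) 0 j)))) m
                 <= INR J * h + K * sg ^ J / (1 - sg)).
  { apply sum_bound; try lra.
    - intros j Hjm HjJ. unfold h.
      apply inv_diff_bound.
      + lra.
      + eapply Rle_trans; [|apply G0]. pose proof (pow_R1_Rle rho j ltac:(lra)). nra.
      + apply Cmod_gt_0. eapply Rlt_le_trans; [|apply G; lia]. pose proof (pow_lt rho j ltac:(lra)). nra.
      + eapply Rle_trans; [apply RC; lia|].
        pose proof (pow_up x j Hx).
        assert (3^j <= 3^J) by (apply Rle_pow; [lra|lia]). nra.
    - intros j Hjm HjJ.
      replace (K * sg ^ j) with (2 / (c * rho ^ j)).
      + apply inv_sum_bound. pose proof (pow_lt rho j ltac:(lra)). nra.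
        apply G; lia. apply G0.
      + unfold K, sg. rewrite pow_inv. field. split; [|lra]. apply pow_nonzero. lra. }
  assert (HJh : INR J * h <= e1 / 4).
  { unfold h, x.
    replace (INR J * (3 ^ J * (delta / mu) / c)) with ((INR J * 3^J) * delta / (mu * c)) by (field; lra).
    apply (Rmult_le_reg_r (mu * c)); [nra|]. unfold Rdiv. rewrite Rmult_assoc, Rinv_l, Rmult_1_r by nra.
    assert (0 <= INR J * 3^J) by (apply Rmult_le_pos; [apply pos_INR| left; apply pow_lt; lra]).
    assert (INR J * 3 ^ J * delta <= INR J * 3^J * (mu * e1 * c / (4 * A3))) by (apply Rmult_le_compat_l; lra).
    assert (INR J * 3^J * (mu * e1 * c / (4 * A3)) <= e1 * / 4 * (mu * c)).
    { unfold A3. apply (Rmult_le_reg_r (4 * (INR J * 3 ^ J + 1))); [lra|].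
      unfold Rdiv. rewrite !Rmult_assoc, Rinv_l by lra. rewrite Rmult_1_r.
      assert (0 <= mu * (e1 * c)) by (apply Rmult_le_pos; [lra| apply Rmult_le_pos; lra]). nra. }
    lra. }
  pose proof (Cmod_Ssum (fun j => Cminus (Cinv (Pw (zs lam) 0 j)) (Cinv (Pw (zs lam0) 0 j))) m) as CS.
  rewrite <- Ssum_minus in CS.
  specialize (HM m Hm).
  replace (Cminus (Ssum (fun j => Cinv (Pw (zs lam) 0 j)) m) L) with
    (Cplus (Cminus (Ssum (fun j => Cinv (Pw (zs lam) 0 j)) m) (Ssum (fun j => Cinv (Pw (zs lam0) 0 j)) m))
           (Cminus (Ssum (fun j => Cinv (Pw (zs lam0) 0 j)) m) L)) by ring.
  eapply Rle_trans; [apply Cmod_triangle|]. fold e1. lra.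
Qed.

Lemma idx_decomp i Nt : (1 <= Nt)%nat -> i = (i mod Nt + i / Nt * Nt)%nat /\ (i mod Nt <= Nt)%nat /\ (Nt * (i / Nt) <= i)%nat.
Proof.
  intros H. pose proof (Nat.div_mod i Nt ltac:(lia)). pose proof (Nat.mod_upper_bound i Nt ltac:(lia)).
  pose proof (Nat.mul_div_le i Nt ltac:(lia)). split; [lia|]. split; lia.
Qed.

Theorem mainTheorem10
  (lam0 : C) (Hnr : nonrecurrent lam0)
  (Nt : nat) (HNt : (1 <= Nt)%nat) (gam : R) (Hgam : 1 < gam)
  (Hbenini : forall k, (Nt <= k)%nat -> forall z, postsing lam0 z ->
     gam < Cmod (Cderiv (fiter lam0 k) z))
  (L : C)
  (HL : filterlim
          (fun n => sum_n (fun j => Cinv (Cderiv (fiter lam0 j) (RtoC 0))) n)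
          eventually (locally L))
  (HL0 : L <> RtoC 0)
  (q : R) (Hq : 0 < q < 1) :
  (exists (N1 : nat) (r delta : R), 0 < r /\ 0 < delta /\
     forall lam, Cmod (Cminus lam lam0) < r -> forall n, (N1 <= n)%nat ->
       (forall j k, (j <= n)%nat -> (k <= Nt)%nat ->
          Cmod (Cminus (xik Nt j k lam) (xik Nt j k lam0)) <= delta) ->
       Cmod (Cminus (Cdiv (Cderiv (zeta n) lam) (Cderiv (fiter lam n) (RtoC 0)))
                    (Cdiv L lam0))
         <= q * Cmod (Cdiv L lam0))
  /\
  (exists (N1 : nat) (r delta : R), 0 < r /\ 0 < delta /\
     forall lam, Cmod (Cminus lam lam0) < r -> forall n, (N1 <= n)%nat ->
       (forall j k, (j <= n)%nat -> (k <= Nt)%nat ->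
          Cmod (Cminus (xik Nt j k lam) (xik Nt j k lam0)) <= delta) ->
       Cmod (Cminus (Cdiv (Cderiv (xi Nt n) lam) (Cderiv (giter Nt lam n) (RtoC 0)))
                    (Cdiv L lam0))
         <= q * Cmod (Cdiv L lam0)).
Proof.
  destruct Hnr as [Hl0 [_ [Delta [HDelta HDiff]]]].
  assert (Hps : forall s, postsing lam0 (zeta s lam0)).
  { intros s eps He. exists s. replace (Cminus (zeta s lam0) (zeta s lam0)) with (RtoC 0) by ring.
    rewrite Cmod_0. exact He. }
  assert (HD : forall i, (1 <= i)%nat -> Delta <= Cmod (zeta i lam0)).
  { intros i Hi. destruct (Rlt_or_le (Cmod (zeta i lam0)) Delta) as [Hlt|Hle]; [|exact Hle].
    exfalso. apply (zeta_nz lam0 i Hl0 Hi). apply HDiff. split; auto. }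
  assert (HBk : forall s, gam < Cmod (Pw (zs lam0) s Nt)).
  { intros s. pose proof (Hbenini Nt (Nat.le_refl Nt) (zeta s lam0) (Hps s)) as H.
    rewrite Cderiv_fiter, Dz_Pw in H. exact H. }
  assert (HL' : forall eps, 0 < eps -> exists M, forall n, (M <= n)%nat ->
      Cmod (Cminus (Ssum (fun j => Cinv (Pw (zs lam0) 0 j)) n) L) < eps).
  { intros eps He.
    destruct (proj1 (filterlim_locally _ _) HL (mkposreal (eps / 2) ltac:(lra))) as [N HN].
    exists (S N). intros n Hn. destruct n as [|n']; [lia|].
    specialize (HN n' ltac:(lia)). apply C_NormedModule_mixin_compat2 in HN. simpl in HN.
    assert (Hs : sqrt 2 < 2).
    { rewrite <- (sqrt_pow2 2) at 2 by lra. apply sqrt_lt_1_alt. lra. }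
    assert (Ef : (fun j => Cinv (Cderiv (fiter lam0 j) (RtoC 0))) = (fun j => Cinv (Pw (zs lam0) 0 j))).
    { apply functional_extensionality. intros j. rewrite Cderiv_fiter.
      change (RtoC 0) with (zeta 0 lam0) at 1. rewrite Dz_Pw. reflexivity. }
    rewrite Ef, sum_n_Ssum in HN.
    change (minus (Ssum (fun j => Cinv (Pw (zs lam0) 0 j)) (S n')) L) with
      (Cminus (Ssum (fun j => Cinv (Pw (zs lam0) 0 j)) (S n')) L) in HN.
    pose proof (Cmod_ge_0 (Cminus (Ssum (fun j => Cinv (Pw (zs lam0) 0 j)) (S n')) L)).
    nra. }
  assert (HE : 0 < q * Cmod (Cdiv L lam0)).
  { apply Rmult_lt_0_compat; [lra|]. apply Cmod_gt_0. intros H.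
    apply HL0. replace L with (Cmult (Cdiv L lam0) lam0) by (field; exact Hl0). rewrite H. ring. }
  destruct (core lam0 Nt gam L Delta (q * Cmod (Cdiv L lam0)) Hl0 HNt Hgam HDelta HE HD HBk HL')
    as [N1 [r [delta [Hr [Hdelta H]]]]].
  assert (HL0m : 0 < Cmod lam0) by (apply Cmod_gt_0; exact Hl0).
  assert (Hnz : forall lam, Cmod (Cminus lam lam0) < Rmin r (Cmod lam0 / 2) -> lam <> RtoC 0).
  { intros lam Hlam. pose proof (Rmin_r r (Cmod lam0 / 2)).
    pose proof (Cmod_rev lam0 lam) as R1. rewrite <- Cmod_opp in Hlam.
    replace (Copp (Cminus lam lam0)) with (Cminus lam0 lam) in Hlam by ring.
    apply Cmod_gt_0. lra. }
  assert (Hr' : 0 < Rmin r (Cmod lam0 / 2)) by (apply Rmin_pos; lra).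
  split.
  - exists N1, (Rmin r (Cmod lam0 / 2)), delta. split; [exact Hr'|]. split; [exact Hdelta|].
    intros lam Hlam n Hn Hc.
    rewrite ratio_identity by (apply Hnz; exact Hlam).
    apply H; auto.
    + pose proof (Rmin_l r (Cmod lam0 / 2)). lra.
    + intros i Hi. destruct (idx_decomp i Nt HNt) as [Ei [Hk Hj]].
      specialize (Hc (i / Nt)%nat (i mod Nt)%nat ltac:(nia) Hk).
      rewrite !xik_zeta, <- Ei in Hc. exact Hc.
  - exists N1, (Rmin r (Cmod lam0 / 2)), delta. split; [exact Hr'|]. split; [exact Hdelta|].
    intros lam Hlam n Hn Hc.
    assert (E1 : xi Nt n = zeta (n * Nt)) by (apply functional_extensionality; intros; apply xi_zeta).
    assert (E2 : giter Nt lam n = fiter lam (n * Nt)) by (apply functional_extensionality; intros; apply giter_fiter).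
    rewrite E1, E2.
    rewrite ratio_identity by (apply Hnz; exact Hlam).
    apply H; auto.
    + pose proof (Rmin_l r (Cmod lam0 / 2)). lra.
    + nia.
    + intros i Hi. destruct (idx_decomp i Nt HNt) as [Ei [Hk Hj]].
      specialize (Hc (i / Nt)%nat (i mod Nt)%nat ltac:(nia) Hk).
      rewrite !xik_zeta, <- Ei in Hc. exact Hc.
Qed.
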